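(* Let $(H,k,\chi)$ be an instance of Precoloring Extension with $H=(V,F)$, $V=\{1,\dots,n\}$, $H$ having at least one edge. Construct a $P_n\,|\,\mathrm{conc}\,|\,C_{\max}$ instance as follows: jobs $1,\dots,n$ with $p_j=1$ and conflict graph initially $G=H$; jobs $a,b$ with $p_a=p_b=1$ and jobs $a',b'$ with $p_{a'}=p_{b'}=k-1$, with conflict edges $\{a,a'\},\{b,b'\},\{a,b\}$; for each $j\in V_0$ with $\chi(j)\in\{2,\dots,k-1\}$, jobs $j(1),j(2)$ with $p_{j(1)}=\chi(j)-1$, $p_{j(2)}=k-\chi(j)$ and conflict edges $\{j,j(1)\},\{j,j(2)\},\{j(1),j(2)\},\{a,j\},\{b,j\},\{a,j(2)\},\{b,j(1)\}$; for each $j\in V_0$ with $\chi(j)=1$, a job $j(2)$ with $p_{j(2)}=k-1$ and conflict edges $\{j,j(2)\},\{b,j\},\{a,j(2)\}$; for each $j\in V_0$ with $\chi(j)=k$, a job $j(1)$ with $p_{j(1)}=k-1$ and conflict edges $\{j,j(1)\},\{a,j\},\{b,j(1)\}$. If $(H,k,\chi)$ has a solution $\chi':\{1,\dots,n\}\to\{1,\dots,k\}$, then the constructed instance has a feasible schedule $C$ with $C_{\max}\le k$.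
   Context: Precoloring Extension: given a graph $H=(V,F)$, an integer $k$, and a proper coloring $\chi:V_0\to\{1,\dots,k\}$ of $H[V_0]$ for some $V_0\subseteq V$, a solution is a proper coloring $\chi':V\to\{1,\dots,k\}$ of $H$ with $\chi'(v)=\chi(v)$ for all $v\in V_0$. In $P_n\,|\,\mathrm{conc}\,|\,C_{\max}$, each job $j$ has integer processing time $p_j\ge1$ and release time $0$, and there is a conflict graph $G$; a schedule $C$ assigning each job a completion time $C_j\in\mathbb{N}$ is feasible if $C_j-p_j\ge0$ for all $j$ and $[C_i-p_i,C_i)\cap[C_j-p_j,C_j)=\emptyset$ for all edges $\{i,j\}$ of $G$; $C_{\max}=\max_j C_j$. *)

(* Defs.v *)
From mathcomp Require Import all_boot.
Set Implicit Arguments. Unset Strict Implicit. Unset Printing Implicit Defensive.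

(* Vertices of H are 'I_n (i.e. 0..n-1, a relabeling of 1..n).
   H is a simple graph: symmetric irreflexive relation on 'I_n. *)

Definition pce_instance n (H : rel 'I_n) (k : nat) (V0 : {set 'I_n})
  (chi : 'I_n -> nat) : Prop :=
  (forall u v, H u v = H v u) /\ (forall v, ~~ H v v) /\
  (forall v, v \in V0 -> 1 <= chi v <= k) /\
  (forall u v, u \in V0 -> v \in V0 -> H u v -> chi u != chi v).

Definition pce_solution n (H : rel 'I_n) (k : nat) (V0 : {set 'I_n})
  (chi : 'I_n -> nat) (chi' : 'I_n -> nat) : Prop :=
  (forall v, 1 <= chi' v <= k) /\
  (forall u v, H u v -> chi' u != chi' v) /\
  (forall v, v \in V0 -> chi' v = chi v).

(* Job names of the constructed scheduling instance:
   Jv j = job j (j in V), Ja, Jb = a, b, Ja', Jb' = a', b',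
   J1 j = j(1), J2 j = j(2). *)
Inductive job (n : nat) : Type :=
| Jv of 'I_n | Ja | Jb | Ja' | Jb' | J1 of 'I_n | J2 of 'I_n.
Arguments Ja {n}. Arguments Jb {n}. Arguments Ja' {n}. Arguments Jb' {n}.

Definition mid k (c : nat) : bool := (2 <= c) && (c <= k - 1).

Definition is_job n (k : nat) (V0 : {set 'I_n}) (chi : 'I_n -> nat)
  (x : job n) : bool :=
  match x with
  | J1 j => (j \in V0) && (mid k (chi j) || (chi j == k))
  | J2 j => (j \in V0) && (mid k (chi j) || (chi j == 1))
  | _ => true
  end.

Definition ptime n (k : nat) (chi : 'I_n -> nat) (x : job n) : nat :=
  match x with
  | Jv _ => 1 | Ja => 1 | Jb => 1 | Ja' => k - 1 | Jb' => k - 1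
  | J1 j => if mid k (chi j) then chi j - 1 else k - 1
  | J2 j => if mid k (chi j) then k - chi j else k - 1
  end.

(* Conflict edges (each unordered edge listed once, as in the paper). *)
Definition conflict n (H : rel 'I_n) (k : nat) (V0 : {set 'I_n})
  (chi : 'I_n -> nat) (x y : job n) : Prop :=
  match x, y with
  | Jv u, Jv v => H u v
  | Ja, Ja' => True
  | Jb, Jb' => True
  | Ja, Jb => True
  | Jv j, J1 j' => j = j' /\ j \in V0 /\ (mid k (chi j) \/ chi j = k)
  | Jv j, J2 j' => j = j' /\ j \in V0 /\ (mid k (chi j) \/ chi j = 1)
  | J1 j, J2 j' => j = j' /\ j \in V0 /\ mid k (chi j)
  | Ja, Jv j => j \in V0 /\ (mid k (chi j) \/ chi j = k)
  | Jb, Jv j => j \in V0 /\ (mid k (chi j) \/ chi j = 1)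
  | Ja, J2 j => j \in V0 /\ (mid k (chi j) \/ chi j = 1)
  | Jb, J1 j => j \in V0 /\ (mid k (chi j) \/ chi j = k)
  | _, _ => False
  end.

(* Feasible schedule: completion times C, release times 0, and
   conflicting jobs have disjoint intervals [C - p, C). *)
Definition feasible n (H : rel 'I_n) (k : nat) (V0 : {set 'I_n})
  (chi : 'I_n -> nat) (C : job n -> nat) : Prop :=
  (forall x, is_job k V0 chi x -> ptime k chi x <= C x) /\
  (forall x y, conflict H k V0 chi x y ->
     forall t : nat, ~ ((C x - ptime k chi x <= t < C x) /\
                        (C y - ptime k chi y <= t < C y))).

Definition cmax_le n (k : nat) (V0 : {set 'I_n}) (chi : 'I_n -> nat)
  (C : job n -> nat) (K : nat) : Prop :=
  forall x, is_job k V0 chi x -> C x <= K.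

(* Main.v *)
Require Import Defs.
From mathcomp Require Import all_boot.
From mathcomp Require Import zify.

Lemma mid_iff k c : mid k c = true <-> 2 <= c /\ c <= k - 1.
Proof. by rewrite /mid; split; [move/andP|move=> [-> ->]]. Qed.

Definition Csch {n} (k : nat) (chi chi' : 'I_n -> nat) (x : job n) : nat := match x with
  | Jv j => chi' j | Ja => 1 | Jb => k | Ja' => k | Jb' => k - 1
  | J1 j => if mid k (chi j) then chi j - 1 else k - 1
  | J2 j => k end.

Theorem lemma9 (n : nat) (H : rel 'I_n) (k : nat) (V0 : {set 'I_n})
  (chi : 'I_n -> nat) :
  pce_instance H k V0 chi ->
  (exists u v, H u v) ->
  (exists chi' : 'I_n -> nat, pce_solution H k V0 chi chi') ->
  exists C : job n -> nat, feasible H k V0 chi C /\ cmax_le k V0 chi C k.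
Proof.
move=> [Hsym [Hirr [Hchi Hprop]]] [u0 [v0 Huv]] [chi' [Hb [Hp Hext]]].
have k2 : 2 <= k.
  have := Hp _ _ Huv; have := Hb u0; have := Hb v0.
  move=> /andP[? ?] /andP[? ?] /eqP ?; lia.
exists (Csch k chi chi'); split; [split|].
- case=> [j|||||j|j] _; rewrite /Csch /=; try lia.
  all: try (case/andP: (Hb j) => ? ?); try (case: (mid k (chi j))); try lia.
- have HB : forall j, 1 <= chi' j /\ chi' j <= k by move=> j; case/andP: (Hb j).
  have HV : forall j, j \in V0 -> 1 <= chi j /\ chi j <= k /\ chi' j = chi j.
    by move=> j hj; case/andP: (Hchi j hj) => ? ?; rewrite Hext.
  case=> [j|||||j|j]; case=> [j'|||||j'|j']; rewrite /Csch /=; try tauto;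
  try (move=> hH t; have := Hp _ _ hH; move/eqP => hne;
       have := HB j; have := HB j'; lia);
  repeat match goal with
  | |- _ /\ _ -> _ => case
  | |- @eq 'I_n _ _ -> _ => let e := fresh in intro e; subst
  | |- is_true (_ \in _) -> _ => let e := fresh in move=> /HV e
  | |- is_true (mid _ _) -> _ => let e := fresh in move=> /mid_iff e
  | |- _ \/ _ -> _ => case
  | |- _ -> _ => intro
  end;
  try (move: (HB j)); try (move: (HB j')); try (move: (HV j));
  try (move: (HV j'));
  try (case E: (mid k (chi j)); [move/mid_iff: E|move/negbT: E; rewrite /mid; move/nandP]);
  try (case E: (mid k (chi j')); [move/mid_iff: E|move/negbT: E; rewrite /mid; move/nandP]);
  try (move/andP => [? ?]); lia.
- case=> [j|||||j|j] _; rewrite /Csch /=; try lia.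
  all: try (case/andP: (Hb j) => ? ?);
    try (case E: (mid k (chi j)); [move/mid_iff: E|]); lia.
Qed.
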